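(* For all $A,B\in[\mathbb{N}]^{<\omega}$ we have $d_{\mathrm{sum}}(A,B)=d_{\mathrm{I}}(A,B)$. Moreover, if $\#A=\#B=k$, then there is a path of length $d_{\mathrm{I}}(A,B)$ from $A$ to $B$ in the universal interlacing graph all of whose vertices lie in $[\mathbb{N}]^k$; consequently the restriction of $d_{\mathrm{I}}$ to $[\mathbb{N}]^k$ equals $d^{(k)}_{\mathrm{I}}$.
   Context: The universal interlacing graph has vertex set $[\mathbb{N}]^{<\omega}$ (finite subsets of $\mathbb{N}$, listed increasingly). Two vertices $A=\{a_1<\dots<a_n\}$ and $B=\{b_1<\dots<b_m\}$ with $A\ne B$ are adjacent iff one of: (i) $n=m+1$ and $a_i\le b_i\le a_{i+1}$ for $1\le i\le m$; (ii) $m=n+1$ and $b_i\le a_i\le b_{i+1}$ for $1\le i\le n$; (iii) $n=m$, $a_i\le b_i\le a_{i+1}$ for $1\le i<n$, and $a_n\le b_n$; (iv) $n=m$, $b_i\le a_i\le b_{i+1}$ for $1\le i<n$, and $b_n\le a_n$. Also $\emptyset$ is adjacent to every singleton. $d_{\mathrm{I}}$ is the shortest-path metric of this graph. For $k\in\mathbb{N}$, Kalton's interlacing graph on $[\mathbb{N}]^k$ (subsets of cardinality $k$) has edges given by (iii) or (iv), and $d^{(k)}_{\mathrm{I}}$ is its graph metric. The summing distance is $d_{\mathrm{sum}}(A,B)=\max\{|\#(A\cap E)-\#(B\cap E)|: E\text{ an interval of }\mathbb{N}\}$ (equivalently $\|\sum_{i\in A}s_i-\sum_{i\in B}s_i\|_{\mathrm{sum}}$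 with $\|\sum a_is_i\|_{\mathrm{sum}}=\sup_{k\le m}|\sum_{i=k}^m a_i|$). *)

(* Defs.v *)
From mathcomp Require Import all_boot.
Set Implicit Arguments. Unset Strict Implicit. Unset Printing Implicit Defensive.

(* A vertex of [N]^{<omega}: a finite subset of N = {1,2,...}, represented by
   the strictly increasing list of its elements. *)
Definition vertex (A : seq nat) : Prop :=
  sorted ltn A /\ all (fun x => 0 < x) A.


Definition interl_succ (A B : seq nat) : Prop :=
  size A = (size B).+1 /\
  forall i, i < size B -> nth 0 A i <= nth 0 B i /\ nth 0 B i <= nth 0 A i.+1.

Definition interl_same (A B : seq nat) : Prop :=
  size A = size B /\
  (forall i, i.+1 < size A -> nth 0 A i <= nth 0 B i /\ nth 0 B i <= nth 0 A i.+1) /\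
  (0 < size A -> nth 0 A (size A).-1 <= nth 0 B (size A).-1).

Definition adjI (A B : seq nat) : Prop :=
  A <> B /\
  (interl_succ A B \/ interl_succ B A \/ interl_same A B \/ interl_same B A \/
   (A = [::] /\ size B = 1) \/ (B = [::] /\ size A = 1)).

Definition adjK (A B : seq nat) : Prop :=
  A <> B /\ (interl_same A B \/ interl_same B A).

Fixpoint walk (V : seq nat -> Prop) (E : seq nat -> seq nat -> Prop)
    (A B : seq nat) (n : nat) : Prop :=
  match n with
  | 0 => V A /\ A = B
  | n'.+1 => V A /\ exists C, E A C /\ walk V E C B n'
  end.

Definition graph_dist (V : seq nat -> Prop) (E : seq nat -> seq nat -> Prop)
    (A B : seq nat) (d : nat) : Prop :=
  walk V E A B d /\ forall m, walk V E A B m -> d <= m.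

Definition vertexk (k : nat) (A : seq nat) : Prop := vertex A /\ size A = k.

Definition dI_is (A B : seq nat) (d : nat) : Prop := graph_dist vertex adjI A B d.
Definition dIk_is (k : nat) (A B : seq nat) (d : nat) : Prop :=
  graph_dist (vertexk k) adjK A B d.

Definition cnt_int (A : seq nat) (p q : nat) : nat :=
  count (fun x => (p <= x) && (x <= q)) A.

Definition absdiff (x y : nat) : nat := (x - y) + (y - x).

(* summing distance: max over intervals E of N of |#(A∩E) - #(B∩E)|.
   Every interval of N meets A ∪ B in the same set as some [p,q] with
   p, q <= M := max(A ∪ B) + 1 (empty interval gives 0), so the max over
   such p, q is the max over all intervals. *)
Definition dsum (A B : seq nat) : nat :=
  let M := (maxn (\max_(x <- A) x) (\max_(x <- B) x)).+2 in
  \max_(p < M) \max_(q < M) absdiff (cnt_int A p q) (cnt_int B p q).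

(* Main.v *)
Require Import Defs.
From mathcomp Require Import all_boot.
From mathcomp Require Import zify.
From Stdlib Require Import Lia Classical.

Definition G (s : seq nat) (x : nat) := count (fun y => y < x) s.

Lemma G0 s : G s 0 = 0.
Proof. by elim: s. Qed.

Lemma G_S s x : uniq s -> G s x.+1 = G s x + (x \in s).
Proof.
elim: s => //= a s IH /andP[ha hu].
rewrite /G /= -/(G s x.+1) -/(G s x) IH // inE.
case: (eqVneq x a) => [->|hne] /=.
  by rewrite (negbTE ha) ltnSn ltnn; lia.
rewrite ltnS leq_eqVlt eq_sym (negbTE hne) /=; lia.
Qed.

Lemma G_mono s x y : x <= y -> G s x <= G s y.
Proof.
move=> hxy; elim: s => //= a s IH.
rewrite /G /= -/(G s x) -/(G s y).
case h1: (a < x); case h2: (a < y) => //=; try lia.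
Qed.

Arguments G_mono s {x y}.

Lemma G_le_size s x : G s x <= size s.
Proof. exact: count_size. Qed.

Lemma G_big s x : all (fun y => y < x) s -> G s x = size s.
Proof. by move=> h; apply/eqP; rewrite -all_count. Qed.

Lemma G_big' s K x : all (fun y => y < K) s -> K <= x -> G s x = size s.
Proof.
move=> h hK; apply: G_big; apply/allP => y /(allP h) hy.
exact: leq_trans hy hK.
Qed.

Lemma G1 s : all (fun x => 0 < x) s -> G s 1 = 0.
Proof.
elim: s => //= a s IH /andP[ha hs].
rewrite /G /= -/(G s 1) IH //; have -> : (a < 1) = false by lia. by [].
Qed.

Lemma nthG s : sorted ltn s -> forall i x, (i < G s x) = (i < size s) && (nth 0 s i < x).
Proof.
elim: s => [|a s IH] //= hs i x.
have hs' : sorted ltn s := path_sorted hs.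
have hmin : all (fun y => a < y) s := order_path_min ltn_trans hs.
rewrite /G /= -/(G s x).
case hax: (a < x) => /=.
  case: i => [|i] /=; first by rewrite hax.
  by rewrite add1n ltnS IH.
have hG : G s x = 0.
  apply/eqP; rewrite -leqn0 leqNgt; apply/negP => /=.
  rewrite IH // => /andP[h1 h2].
  have : a < nth 0 s 0 by apply: (allP hmin); apply: mem_nth.
  move: hax; rewrite ltnNge => /negbFE hxa h3.
  lia.
rewrite hG /=; symmetry; apply/negbTE; apply/negP => /andP[hsz].
case: i hsz => [|i] /= hsz; first by rewrite hax.
move=> h; have : a < nth 0 s i.
  by apply: (allP hmin); apply: mem_nth.
move: hax; rewrite ltnNge => /negbFE; lia.
Qed.

Lemma shift1 A B s : sorted ltn A -> sorted ltn B -> (forall x, G A x <= G B x + s) ->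
  forall i, i + s < size A -> i < size B /\ nth 0 B i <= nth 0 A (i+s).
Proof.
move=> hA hB H i hi.
have h1 : i + s < G A (nth 0 A (i+s)).+1 by rewrite nthG // hi ltnSn.
have := H (nth 0 A (i+s)).+1 => h2.
have : i < G B (nth 0 A (i+s)).+1 by lia.
rewrite nthG // => /andP[h3 h4]; split => //.
Qed.

Arguments shift1 {A B s}.

Lemma shift2 A B s : sorted ltn A -> sorted ltn B ->
  (forall i, i + s < size A -> i < size B /\ nth 0 B i <= nth 0 A (i+s)) ->
  forall x, G A x <= G B x + s.
Proof.
move=> hA hB H x; rewrite leqNgt; apply/negP => Hlt.
have : G B x + s < G A x by lia.
rewrite nthG // => /andP[h1 h2].
have [h3 h4] := H _ h1.
have e := @nthG B hB (G B x) x; rewrite ltnn h3 /= in e.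
have : nth 0 B (G B x) < x by lia.
by rewrite -e.
Qed.

Arguments shift2 {A B s}.

Definition Kb (s : seq nat) := (\max_(y <- s) y).+1.

Lemma all_lt_Kb s : all (fun y => y < Kb s) s.
Proof.
apply/allP => y hy; rewrite /Kb ltnS.
by apply: (leq_bigmax_seq y hy).
Qed.

Lemma G_Kb s x : Kb s <= x -> G s x = size s.
Proof. by apply: G_big'; apply: all_lt_Kb. Qed.

Lemma Geq_eq A B : sorted ltn A -> sorted ltn B -> (forall x, G A x = G B x) -> A = B.
Proof.
move=> hA hB H.
have hs : size A = size B.
  rewrite -(@G_Kb A (maxn (Kb A) (Kb B))) ?leq_maxl //.
  by rewrite H G_Kb // leq_maxr.
apply: (eq_from_nth (x0:=0) hs) => i hi.
have h1 : forall x, G A x <= G B x + 0 by move=> x; rewrite H addn0.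
have h2 : forall x, G B x <= G A x + 0 by move=> x; rewrite H addn0.
have [_ e1] := shift1 hA hB h1 i ltac:(by rewrite addn0).
have [_ e2] := shift1 hB hA h2 i ltac:(by rewrite addn0 -hs).
rewrite addn0 in e1 e2; apply/eqP; rewrite eqn_leq e1 e2 //.
Qed.

Definition P (A C : seq nat) := forall x, G C x <= G A x /\ G A x <= G C x + 1.

Lemma P_size A C : P A C -> size C <= size A /\ size A <= size C + 1.
Proof.
move=> H; have [h1 h2] := H (maxn (Kb A) (Kb C)).
by rewrite !G_Kb ?leq_maxl ?leq_maxr in h1 h2.
Qed.

Arguments P_size {A C}.

Lemma P_same A C : sorted ltn A -> sorted ltn C -> P A C -> size A = size C -> interl_same A C.
Proof.
move=> hA hC H hs.
have h0 : forall x, G C x <= G A x + 0 by move=> x; rewrite addn0; case: (H x).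
have h1 : forall x, G A x <= G C x + 1 by move=> x; case: (H x).
have s0 := shift1 hC hA h0; have s1 := shift1 hA hC h1.
split => //; split.
  move=> i hi; have [_ e0] := s0 i ltac:(by lia); have [_ e1] := s1 i ltac:(by rewrite addn1).
  by rewrite addn0 in e0; rewrite addn1 in e1.
move=> hpos; have [_ e0] := s0 (size A).-1 ltac:(by lia).
by rewrite addn0 in e0.
Qed.

Arguments P_same {A C}.

Lemma P_succ A C : sorted ltn A -> sorted ltn C -> P A C -> size A = (size C).+1 -> interl_succ A C.
Proof.
move=> hA hC H hs.
have h0 : forall x, G C x <= G A x + 0 by move=> x; rewrite addn0; case: (H x).
have h1 : forall x, G A x <= G C x + 1 by move=> x; case: (H x).
have s0 := shift1 hC hA h0; have s1 := shift1 hA hC h1.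
split => // i hi; have [_ e0] := s0 i ltac:(by lia); have [_ e1] := s1 i ltac:(by lia).
by rewrite addn0 in e0; rewrite addn1 in e1.
Qed.

Arguments P_succ {A C}.

Lemma same_P A C : sorted ltn A -> sorted ltn C -> interl_same A C -> P A C.
Proof.
move=> hA hC [hs [H1 H2]] x; split.
  rewrite -[G A x]addn0; apply: (shift2 hC hA) => i; rewrite addn0 => hi; split; first by lia.
  case: (ltnP i.+1 (size A)) => hi'; first by case: (H1 i hi').
  have -> : i = (size A).-1 by lia.
  by apply: H2; lia.
apply: (shift2 hA hC) => i; rewrite addn1 => hi; split; first by lia.
by case: (H1 i hi).
Qed.

Arguments same_P {A C}.

Lemma succ_P A C : sorted ltn A -> sorted ltn C -> interl_succ A C -> P A C.
Proof.
move=> hA hC [hs H1] x; split.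
  rewrite -[G A x]addn0; apply: (shift2 hC hA) => i; rewrite addn0 => hi; split; first by lia.
  by case: (H1 i hi).
apply: (shift2 hA hC) => i; rewrite addn1 => hi; split; first by lia.
by case: (H1 i ltac:(by lia)).
Qed.

Arguments succ_P {A C}.

Lemma P_adjI A C : sorted ltn A -> sorted ltn C -> P A C -> A <> C -> adjI A C /\ adjI C A.
Proof.
move=> hA hC H hne; have [s1 s2] := P_size H.
case: (eqVneq (size A) (size C)) => hs.
  move: (P_same hA hC H hs) => hI.
  split; split.
  - exact: hne.
  - by right; right; left.
  - by move=> e; apply: hne.
  - by right; right; right; left.
have hs' : size A = (size C).+1 by lia.
move: (P_succ hA hC H hs') => hI.
split; split.
- exact: hne.
- by left.
- by move=> e; apply: hne.
- by right; left.
Qed.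

Arguments P_adjI {A C}.

Lemma adjI_P A C : sorted ltn A -> sorted ltn C -> adjI A C -> P A C \/ P C A.
Proof.
move=> hA hC [_ [h|[h|[h|[h|[[-> h]|[-> h]]]]]]].
- by left; apply: succ_P.
- by right; apply: succ_P.
- by left; apply: same_P.
- by right; apply: same_P.
- by right; apply: succ_P => //; split => // i; rewrite h.
- by left; apply: succ_P => //; split => // i; rewrite h.
Qed.

Arguments adjI_P {A C}.

Definition Bd A B m := forall a b, G A a + G B b <= G A b + G B a + m.

Lemma Bd_sym A B m : Bd A B m -> Bd B A m.
Proof. by move=> H a b; have := H b a; lia. Qed.

Arguments Bd_sym {A B m}.

Lemma Bd_PAC A C : P A C -> Bd A C 1.
Proof. by move=> H a b; have [h1 h2] := H a; have [h3 h4] := H b; lia. Qed.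

Lemma Bd_PCA A C : P C A -> Bd A C 1.
Proof. by move=> H a b; have [h1 h2] := H a; have [h3 h4] := H b; lia. Qed.

Lemma Bd_trans A C B m1 m2 : Bd A C m1 -> Bd C B m2 -> Bd A B (m1 + m2).
Proof. by move=> H1 H2 a b; have := H1 a b; have := H2 a b; lia. Qed.

Lemma Bd_refl A : Bd A A 0.
Proof. by move=> a b; lia. Qed.

Lemma Bd0_eq A B : sorted ltn A -> sorted ltn B -> Bd A B 0 -> A = B.
Proof.
move=> hA hB H; apply: Geq_eq => // x.
have := H x 0; have := H 0 x; rewrite !G0; lia.
Qed.

Lemma cnt_G A p q : cnt_int A p q = G A q.+1 - G A p.
Proof.
case: (leqP p q.+1) => hp.
  suff : G A q.+1 = cnt_int A p q + G A p by lia.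
  elim: A => [|a A IH] //=.
  rewrite /cnt_int /G /= -/(G A q.+1) -/(G A p) -/(cnt_int A p q) IH.
  case: (ltnP a p) => h1; case: (leqP a q) => h2 /=; try lia.
have -> : cnt_int A p q = 0.
  elim: A => [|a A IH] //=; rewrite /cnt_int /= -/(cnt_int A p q) IH.
  case: (leqP p a) => h1 //=; case: (leqP a q) => h2 //=; lia.
have := G_mono A (ltnW hp); lia.
Qed.

Lemma dsum_Bd A B n : Bd A B n -> dsum A B <= n.
Proof.
move=> H; rewrite /dsum /=; apply/bigmax_leqP => p _; apply/bigmax_leqP => q _.
rewrite !cnt_G /absdiff.
have := H p q.+1; have := H q.+1 p.
case: (leqP p q.+1) => hp.
  have := G_mono A hp; have := G_mono B hp; lia.
have := G_mono A (ltnW hp); have := G_mono B (ltnW hp); lia.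
Qed.

Lemma G_clamp s K a : Kb s <= K -> G s a = G s (minn a K).
Proof.
move=> hK; case: (leqP a K) => h //.
rewrite !G_Kb //; exact: leq_trans hK (ltnW h).
Qed.

Lemma Bd_dsum A B n : dsum A B <= n -> Bd A B n.
Proof.
set K := maxn (Kb A) (Kb B).
move=> H.
have Hpq : forall p q, p < K.+1 -> q < K.+1 ->
    absdiff (cnt_int A p q) (cnt_int B p q) <= n.
  move=> p q hp hq; move: H; rewrite /dsum /=.
  have eM : (maxn (\max_(x <- A) x) (\max_(x <- B) x)).+2 = K.+1.
    by rewrite /K /Kb; lia.
  rewrite eM => /bigmax_leqP H.
  have := H (Ordinal hp) isT => /bigmax_leqP H'.
  exact: (H' (Ordinal hq) isT).
have Hxy : forall x y, x <= y -> y <= K ->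
    G A y + G B x <= G B y + G A x + n /\ G B y + G A x <= G A y + G B x + n.
  move=> x y hxy hyK.
  case: y hxy hyK => [|y] hxy hyK.
    have -> : x = 0 by lia.
    by rewrite !G0.
  have := Hpq x y ltac:(lia) ltac:(lia).
  rewrite !cnt_G /absdiff.
  have := G_mono A hxy; have := G_mono B hxy; lia.
move=> a b.
rewrite (@G_clamp A K a) ?leq_maxl // (@G_clamp A K b) ?leq_maxl //.
rewrite (@G_clamp B K a) ?leq_maxr // (@G_clamp B K b) ?leq_maxr //.
case: (leqP (minn a K) (minn b K)) => h.
  have [h1 h2] := Hxy _ _ h (geq_minr _ _); lia.
have [h1 h2] := Hxy _ _ (ltnW h) (geq_minr _ _); lia.
Qed.

Lemma walk_V V E A B n : walk V E A B n -> V A /\ V B.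
Proof.
elim: n A => [|n IH] A /=; first by move=> [h <-].
by move=> [h [C [_ hw]]]; split => //; case: (IH _ hw).
Qed.

Arguments walk_V {V E A B n}.

Lemma walk_snoc V E A C B m : walk V E A C m -> E C B -> V B -> walk V E A B m.+1.
Proof.
elim: m A => [|m IH] A /=.
  by move=> [h <-] he hv; split => //; exists B; split.
by move=> [h [D [he hw]]] hcb hv; split => //; exists D; split => //; apply: IH.
Qed.

Lemma walk_mono (V V' : seq nat -> Prop) (E E' : seq nat -> seq nat -> Prop) A B n :
  (forall x, V x -> V' x) -> (forall x y, E x y -> E' x y) ->
  walk V E A B n -> walk V' E' A B n.
Proof.
move=> hV hE; elim: n A => [|n IH] A /=.
  by move=> [h <-]; split => //; apply: hV.
by move=> [h [D [he hw]]]; split; [apply: hV | exists D; split; [apply: hE | apply: IH]].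
Qed.

Lemma walk_Bd (V : seq nat -> Prop) (E : seq nat -> seq nat -> Prop) A B n :
  (forall X Y, V X -> V Y -> E X Y -> Bd X Y 1) -> walk V E A B n -> Bd A B n.
Proof.
move=> hE; elim: n A => [|n IH] A /=.
  by move=> [h ->]; apply: Bd_refl.
move=> [h [D [he hw]]].
have [hD _] := walk_V hw.
rewrite -add1n; exact: (@Bd_trans _ _ _ _ _ (hE _ _ h hD he) (IH _ hw)).
Qed.


Lemma step_arith (ga gb gaz gbz gc : nat) (a b : bool) :
  ga + gbz <= gaz + gb -> ga + a + gbz <= gaz + (gb + b) ->
  gc + (ga + gbz == gaz + gb) = ga ->
  gc + (if (ga + a + gbz == gaz + (gb + b)) == (ga + gbz == gaz + gb) then a
        else (ga + gbz == gaz + gb)) + (ga + a + gbz == gaz + (gb + b)) = ga + a.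
Proof.
case: (eqVneq (ga + gbz) (gaz + gb)) => e0;
case: (eqVneq (ga + a + gbz) (gaz + (gb + b))) => e1 /=;
case: a e1; case: b => /= e1; lia.
Qed.

Lemma bd_arith (Aa Ab Az Ba Bb Bz Ca Cb n : nat) :
  Ca + (Aa + Bz == Az + Ba) = Aa -> Cb + (Ab + Bz == Az + Bb) = Ab ->
  Aa + Bz <= Az + Ba -> Ab + Bz <= Az + Bb ->
  Aa + Bb <= Ab + Ba + n.+1 -> Az + Bb <= Ab + Bz + n.+1 ->
  Ca + Bb <= Cb + Ba + n.
Proof.
case: (eqVneq (Aa + Bz) (Az + Ba)) => e0;
case: (eqVneq (Ab + Bz) (Az + Bb)) => e1 /=; lia.
Qed.

Arguments bd_arith {Aa Ab Az Ba Bb Bz Ca Cb n}.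

Lemma P_arith (c a : nat) (b : bool) : c + b = a -> c <= a /\ a <= c + 1.
Proof. by case: b => /=; lia. Qed.

Lemma succ_arith (x : nat) : x + true = x -> False.
Proof. lia. Qed.

Lemma size_arith (c a bz az : nat) : bz < az -> c + (a + bz == az + a) = a -> c = a.
Proof. case: eqP => /=; lia. Qed.

Lemma argmax_ex (f : nat -> nat) K : exists z, z <= K /\ forall t, t <= K -> f t <= f z.
Proof.
elim: K => [|K [z [hz H]]].
  by exists 0; split => // t; rewrite leqn0 => /eqP ->.
case: (leqP (f K.+1) (f z)) => h.
  exists z; split; first by lia.
  move=> t; rewrite leq_eqVlt => /orP[/eqP -> //|ht]; by apply: H.
exists K.+1; split => // t; rewrite leq_eqVlt => /orP[/eqP -> //|ht].
have := H t ht; lia.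
Qed.

Lemma zero_notin A : all (fun x => 0 < x) A -> (0 \in A) = false.
Proof. by move=> h; apply/negbTE/negP => /(allP h). Qed.

Lemma construct A B n x0 : vertex A -> vertex B -> Bd A B n.+1 -> G B x0 < G A x0 ->
  exists C, vertex C /\ P A C /\ A <> C /\ Bd C B n /\ (size A = size B -> size C = size A).
Proof.
move=> [sA pA] [sB pB] HB hx0.
have uA : uniq A := sorted_uniq ltn_trans ltnn sA.
have uB : uniq B := sorted_uniq ltn_trans ltnn sB.
set K := maxn (Kb A) (Kb B).
have [z [hzK hz]] := argmax_ex (fun t => G A t + size B - G B t) K.
have hmax : forall t, G A t + G B z <= G A z + G B t.
  move=> t; rewrite (@G_clamp A K t) ?leq_maxl // (@G_clamp B K t) ?leq_maxr //.
  have := hz (minn t K) (geq_minr _ _) => /=.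
  have := G_le_size B (minn t K); have := G_le_size B z; lia.
have hpos : G B z < G A z by have := hmax x0; lia.
pose h t := (G A t + G B z == G A z + G B t).
pose c t := if h t.+1 == h t then t \in A else h t.
pose C := [seq t <- iota 0 K | c t].
have uC : uniq C by apply: filter_uniq; apply: iota_uniq.
have sC : sorted ltn C by apply: sorted_filter; [exact: ltn_trans | exact: iota_ltn_sorted].
have memC : forall t, (t \in C) = c t && (t < K).
  by move=> t; rewrite mem_filter mem_iota add0n.
have h0 : h 0 = false.
  by rewrite /h !G0 /=; apply/negbTE; lia.
have h1 : h 1 = false.
  by rewrite /h !G1 //=; apply/negbTE; lia.
have allC : all (fun y => y < K) C by apply/allP => y; rewrite memC => /andP[].
have keyK : forall t, t <= K -> G C t + h t = G A t.
  elim => [|t IH] ht; first by rewrite !G0 h0.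
  rewrite (@G_S C t uC) (@G_S A t uA) memC ht andbT.
  have := IH (ltnW ht) => {IH}.
  have := hmax t; have := hmax t.+1.
  rewrite /c /h (@G_S A t uA) (@G_S B t uB) => hm1 hm0 hI.
  exact: step_arith.
have key : forall t, G C t + h t = G A t.
  move=> t; case: (leqP t K) => ht; first exact: keyK.
  have e1 : G C t = G C K by rewrite !(@G_big' C K _ allC) // ltnW.
  have e2 : G A t = G A K by rewrite !G_Kb ?leq_maxl // (leq_trans (leq_maxl _ _) (ltnW ht)).
  have e3 : G B t = G B K by rewrite !G_Kb ?leq_maxr // (leq_trans (leq_maxr _ _) (ltnW ht)).
  by rewrite /h e1 e2 e3; apply: keyK.
exists C; split.
  split => //; apply/allP => y; rewrite memC => /andP[hc _].
  case: y hc => [|y] //; rewrite /c h1 h0 /= zero_notin //.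
split.
  by move=> t; apply: P_arith (key t).
split.
  move=> eAC; have := key z; rewrite -eAC /h eqxx; exact: succ_arith.
split.
  move=> a b.
  exact: (bd_arith (key a) (key b) (hmax a) (hmax b) (HB a b) (HB z b)).
move=> hs.
have := key K; rewrite /h (@G_big' C K _ allC) // (@G_Kb A K) ?leq_maxl // (@G_Kb B K) ?leq_maxr // -hs.
exact: size_arith.
Qed.

Arguments construct {A B n x0}.

Lemma main (V : seq nat -> Prop) (E : seq nat -> seq nat -> Prop) :
  (forall A, V A -> vertex A) ->
  (forall A B C, V A -> V B -> vertex C -> P A C -> A <> C ->
     (size A = size B -> size C = size A) -> V C /\ E A C /\ E C A) ->
  forall n A B, V A -> V B -> Bd A B n -> exists m, m <= n /\ walk V E A B m.
Proof.
move=> hV hC; elim=> [|n IH] A B hA hB H.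
  exists 0; split => //=; split => //.
  by apply: Bd0_eq => //; [case: (hV _ hA) | case: (hV _ hB)].
case: (classic (A = B)) => [<-|hne].
  by exists 0; split.
case: (classic (exists x, G B x < G A x)) => [[x hx]|hno].
  have [C [vC [pC [nC [bC sC]]]]] := construct (hV _ hA) (hV _ hB) H hx.
  have [VC [EAC _]] := hC A B C hA hB vC pC nC sC.
  have [m [hm hw]] := IH C B VC hB bC.
  exists m.+1; split => //=; split => //; by exists C; split.
have [x2 hx2] : exists x, G A x < G B x.
  apply: NNPP => hno2; apply: hne; apply: Geq_eq; [by case: (hV _ hA) | by case: (hV _ hB) |].
  move=> x; apply/eqP; rewrite eqn_leq; apply/andP; split; rewrite leqNgt; apply/negP => hlt.
    by apply: hno; exists x.
  by apply: hno2; exists x.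
have [C [vC [pC [nC [bC sC]]]]] := construct (hV _ hB) (hV _ hA) (Bd_sym H) hx2.
have [VC [EBC ECB]] := hC B A C hB hA vC pC nC sC.
have [m [hm hw]] := IH A C hA VC (Bd_sym bC).
exists m.+1; split => //; exact: walk_snoc hw ECB hB.
Qed.

Lemma hC_I A B C : vertex A -> vertex B -> vertex C -> P A C -> A <> C ->
  (size A = size B -> size C = size A) -> vertex C /\ adjI A C /\ adjI C A.
Proof.
move=> [sA _] _ hCv pC nC _; split => //.
exact: P_adjI sA (proj1 hCv) pC nC.
Qed.

Lemma hC_K k A B C : vertexk k A -> vertexk k B -> vertex C -> P A C -> A <> C ->
  (size A = size B -> size C = size A) -> vertexk k C /\ adjK A C /\ adjK C A.
Proof.
move=> [[sA pA] eA] [_ eB] [sC pC'] pC nC hs.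
have eC : size C = size A by apply: hs; rewrite eA eB.
have hI := P_same sA sC pC (esym eC).
split; first by split; [split | rewrite eC].
split; split => //; [by left | by move=> e; apply: nC | by right].
Qed.

Lemma lowI X Y : vertex X -> vertex Y -> adjI X Y -> Bd X Y 1.
Proof.
move=> [sX _] [sY _] h; case: (adjI_P sX sY h) => hp.
  exact: Bd_PAC.
exact: Bd_PCA.
Qed.

Lemma lowK k X Y : vertexk k X -> vertexk k Y -> adjK X Y -> Bd X Y 1.
Proof.
move=> [[sX _] _] [[sY _] _] [_ [h|h]].
  exact: Bd_PAC (same_P sX sY h).
exact: Bd_PCA (same_P sY sX h).
Qed.

Lemma adjK_I X Y : adjK X Y -> adjI X Y.
Proof. by move=> [ne [h|h]]; split => //; right; right; [left | right; left]. Qed.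

Theorem theorem5p1 :
  (forall A B : seq nat, vertex A -> vertex B -> dI_is A B (dsum A B)) /\
  (forall (k : nat) (A B : seq nat), vertexk k A -> vertexk k B ->
     walk (vertexk k) adjI A B (dsum A B) /\ dIk_is k A B (dsum A B)).
Proof.
split.
  move=> A B hA hB.
  have hb := @Bd_dsum A B _ (leqnn (dsum A B)).
  have [m [hm hw]] := @main vertex adjI (fun A h => h) hC_I _ A B hA hB hb.
  have low : forall m', walk vertex adjI A B m' -> dsum A B <= m'.
    by move=> m' hw'; apply: dsum_Bd; exact: walk_Bd lowI hw'.
  have e : m = dsum A B by apply/eqP; rewrite eqn_leq hm low.
  by split; [rewrite -e | ].
move=> k A B hA hB.
have hb := @Bd_dsum A B _ (leqnn (dsum A B)).
have [m [hm hw]] := @main (vertexk k) adjK (fun A h => proj1 h) (@hC_K k) _ A B hA hB hb.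
have low : forall m', walk (vertexk k) adjK A B m' -> dsum A B <= m'.
  by move=> m' hw'; apply: dsum_Bd; exact: walk_Bd (@lowK k) hw'.
have e : m = dsum A B by apply/eqP; rewrite eqn_leq hm low.
rewrite -e; split.
  by apply: walk_mono hw => // x y; apply: adjK_I.
by split => // m' hw'; rewrite e; apply: low.
Qed.
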